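(* Let $G$ be an $(n,n,p_s,p_d)$-two-island network with groups $V_1,V_2$ and degree of homophily $h_G=p_s/p_d$, and let the dual opinions evolve according to the dynamics in the context with common resilience $\phi\in(0,1)$, common bias $b$ with $\frac{2}{\phi(h_G-1)+2}\le b<1$, and the symmetric initial condition $x_i(0)=x_0\in(\tfrac12,1)$, $y_i(0)=y_0\in[\tfrac12,x_0]$ for $i\in V_1$, $x_j(0)=1-x_0$, $y_j(0)=1-y_0$ for $j\in V_2$. Let $i\in V_1$. If there exists $T>0$ such that $x_i(t)<\hat x(\phi,h_G,b)$ for all $t\ge T$, then there exists $\mathcal T>T$ such that $x_i(t)$ and $y_i(t)$ are monotonic for $t\ge\mathcal T$, and $$\lim_{t\to\infty}x_i(t)=\hat x(\phi,h_G,b),\qquad \lim_{t\to\infty}y_i(t)=\frac{\phi(h_G+1)\hat x(\phi,h_G,b)+1-\phi}{\phi h_G+2-\phi}.$$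
   Context: Let $n\ge 1$ and $p_s,p_d\in(0,1)$ with $p_s>p_d$ and $np_s,np_d$ positive integers. An $(n,n,p_s,p_d)$-two-island network is an undirected graph (no self-loops) with vertex set $V=V_1\cup V_2$, $V_1\cap V_2=\emptyset$, $|V_1|=|V_2|=n$, such that each node of $V_1$ has exactly $np_s$ neighbours in $V_1$ and $np_d$ neighbours in $V_2$, and each node of $V_2$ has exactly $np_s$ neighbours in $V_2$ and $np_d$ neighbours in $V_1$. Its degree of homophily is $h_G=p_s/p_d>1$. Let $w_{ij}\in\{0,1\}$ be the adjacency matrix, $N_i$ the set of neighbours of $i$, and $d_i=\sum_{j\in N_i}w_{ij}$. Dual opinions dynamics: each $i\in V$ has $x_i(t),y_i(t)\in[0,1]$, $t=0,1,2,\dots$, updated by $$x_i(t+1)=\frac{x_i(t)^{b}s_i(t)}{x_i(t)^{b}s_i(t)+(1-x_i(t))^{b}(d_i-s_i(t))},\qquad y_i(t+1)=\phi\, x_i(t+1)+(1-\phi)\hat y_{i,avg}(t),$$ with $s_i(t)=\sum_{j\in N_i}w_{ij}y_j(t)$ and $\hat y_{i,avg}(t)=\sum_{j\in N_i}\frac{w_{ij}}{d_i}y_j(t)$. For $0<b<1$ define $g(x,b)=\frac{x^{1-b}-(1-x)^{1-b}}{x(1-x)^{1-b}-(1-x)x^{1-b}}$ for $x\in(\tfrac12,1)$ and $g(\tfrac12,b)=\frac2b-2$. $\hat x(\phi,h_G,b)$ denotes the solution $x\in[\tfrac12,1)$ of $g(x,b)=\phi(h_G-1)$ (it lies in $(\tfrac12,1)$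 when $b>\frac{2}{\phi(h_G-1)+2}$ and equals $\tfrac12$ when $b=\frac{2}{\phi(h_G-1)+2}$). *)

(* Defs.v *)
From HB Require Import structures.
From mathcomp Require Import all_boot all_order all_algebra.
From mathcomp Require Import all_classical all_reals all_analysis.
Set Implicit Arguments. Unset Strict Implicit. Unset Printing Implicit Defensive.
Import Order.TTheory GRing.Theory Num.Theory.
Import numFieldNormedType.Exports.
Local Open Scope ring_scope.

(* An (n,n,p_s,p_d)-two-island network on a finite vertex type T, given by a
   symmetric irreflexive adjacency relation e; V1 is the first group and its
   complement ~: V1 the second one; ks = n p_s and kd = n p_d. *)
Definition two_island (T : finType) (e : rel T) (V1 : {set T}) (n ks kd : nat) : Prop :=
  [/\ symmetric e, irreflexive e, #|V1| = n /\ #|~: V1| = n,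
      (forall i, i \in V1 ->
         #|[set j in V1 | e i j]| = ks /\ #|[set j in ~: V1 | e i j]| = kd) &
      (forall i, i \in ~: V1 ->
         #|[set j in ~: V1 | e i j]| = ks /\ #|[set j in V1 | e i j]| = kd)].

Definition deg (T : finType) (e : rel T) (R : realType) (i : T) : R :=
  #|[set j | e i j]|%:R.

Definition ssum (R : realType) (T : finType) (e : rel T) (y : T -> R) (i : T) : R :=
  \sum_(j | e i j) y j.

Definition dual_dynamics (R : realType) (T : finType) (e : rel T) (phi b : R)
  (x y : nat -> T -> R) : Prop :=
  forall (t : nat) (i : T),
    let s := ssum e (y t) i in
    let d := deg e R i in
    x t.+1 i = (x t i `^ b * s) / (x t i `^ b * s + (1 - x t i) `^ b * (d - s)) /\
    y t.+1 i = phi * x t.+1 i + (1 - phi) * (s / d).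

Definition gfun (R : realType) (x b : R) : R :=
  if x == 2^-1 then 2 / b - 2
  else (x `^ (1 - b) - (1 - x) `^ (1 - b)) /
       (x * (1 - x) `^ (1 - b) - (1 - x) * x `^ (1 - b)).

Definition monotone_from (R : realType) (u : nat -> R) (N : nat) : Prop :=
  (forall t, (N <= t)%N -> u t <= u t.+1) \/ (forall t, (N <= t)%N -> u t.+1 <= u t).

(* Main.v *)
Require Import Defs.
From HB Require Import structures.
From mathcomp Require Import all_boot all_order all_algebra.
From mathcomp Require Import all_classical all_reals all_analysis.
Import Order.TTheory GRing.Theory Num.Theory.
Import numFieldNormedType.Exports.
From mathcomp Require Import ring lra.
Local Open Scope classical_set_scope.
Local Open Scope ring_scope.


Section A.
Context {R : realType}.

Definition psi (m s : R) := ln (1 + m * expR s) - ln (m + expR s).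
Definition dpsi (m s : R) := m * expR s / (1 + m * expR s) - expR s / (m + expR s).

Lemma psi_derive (m s : R) : 1 < m -> is_derive s 1 (psi m) (dpsi m s).
Proof.
move=> m1.
have e0 := expR_gt0 s.
have -> : psi m = ((@ln R) \o (cst 1 + m \*: (@expR R))) - ((@ln R) \o (cst m + (@expR R))).
  by apply/funext => z; rewrite /psi.
apply: is_derive_eq.
apply: is_deriveB; apply: is_derive1_comp.
- apply: is_derive1_ln. change (0 < 1 + m * expR s). nra.
- apply: is_derive1_ln. change (0 < m + expR s). nra.
change ((1 + m * expR s)^-1 * (0 + m * expR s) - (m + expR s)^-1 * (0 + expR s) = dpsi m s).
rewrite /dpsi !add0r. field. all: apply/andP; split; apply: lt0r_neq0; nra.
Qed.

Lemma dpsi_decr {m a c : R} : 1 < m -> 0 <= a -> a < c -> dpsi m c < dpsi m a.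
Proof.
move=> m1 a0 ac.
have E1 : 1 <= expR a by rewrite -expR0 ler_expR.
have E12 : expR a < expR c by rewrite ltr_expR.
rewrite /dpsi.
set u := expR a in E1 E12 *; set v := expR c in E12 *.
have hv : 1 < v by lra.
rewrite -subr_gt0.
have -> : m * u / (1 + m * u) - u / (m + u) - (m * v / (1 + m * v) - v / (m + v))
   = (m * m - 1) * m * (v - u) * (u * v - 1) / ((1 + m * u) * (m + u) * (1 + m * v) * (m + v)).
  field; repeat split; nra.
apply: divr_gt0; last by repeat apply: mulr_gt0; nra.
repeat apply: mulr_gt0; nra.
Qed.

Lemma psi0 (m : R) : psi m 0 = 0.
Proof. by rewrite /psi expR0 mulr1 [1 + m]addrC subrr. Qed.

Lemma psi_cont (m a b : R) : 1 < m -> {within `[a, b], continuous (psi m)}.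
Proof.
move=> m1; apply: derivable_within_continuous => x _.
by have [] := psi_derive m x m1.
Qed.

Lemma psi_star {m s1 s2 : R} : 1 < m -> 0 < s1 -> s1 < s2 ->
  s1 * psi m s2 < s2 * psi m s1.
Proof.
move=> m1 s10 s12.
have [c1 c1in E1] := MVT s10 (fun x _ => psi_derive m x m1) (psi_cont m 0 s1 m1).
have [c2 c2in E2] := MVT s12 (fun x _ => psi_derive m x m1) (psi_cont m s1 s2 m1).
move: c1in c2in; rewrite !in_itv /= => /andP[c10 c11] /andP[c20 c21].
have D := dpsi_decr m1 (ltW c10) (lt_trans c11 c20).
move: E1; rewrite psi0 subr0 subr0 => E1.
have -> : psi m s2 = psi m s1 + dpsi m c2 * (s2 - s1) by rewrite -E2; ring.
rewrite E1.
have : 0 < (s2 - s1) * s1 by apply: mulr_gt0; lra.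
nra.
Qed.

Lemma expRln (x : R) : 0 < x -> expR (ln x) = x.
Proof. by move=> x0; rewrite lnK // posrE. Qed.

Lemma powRE (x p : R) : 0 < x -> x `^ p = expR (p * ln x).
Proof. by move=> x0; rewrite /powR gt_eqF. Qed.

Definition ell (x : R) := ln x - ln (1 - x).

Lemma ell_gt0 (x : R) : 2^-1 < x < 1 -> 0 < ell x.
Proof.
move=> /andP[x1 x2]; rewrite /ell subr_gt0 ltr_ln ?posrE; lra.
Qed.

Lemma ell_lt (x y : R) : 0 < x -> x < y -> y < 1 -> ell x < ell y.
Proof.
move=> x0 xy y1; rewrite /ell.
have h1 : ln x < ln y by rewrite ltr_ln ?posrE; lra.
have h2 : ln (1 - y) < ln (1 - x) by rewrite ltr_ln ?posrE; lra.
lra.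
Qed.

Lemma sign_F (b X s t : R) : 0 < X < 1 -> 0 < s -> 0 < t ->
  (X <= X `^ b * s / (X `^ b * s + (1 - X) `^ b * t)) =
  (ln X + b * ln (1 - X) + ln t <= ln (1 - X) + b * ln X + ln s).
Proof.
move=> /andP[X0 X1] s0 t0.
have X0' : 0 < 1 - X by lra.
rewrite !powRE //.
have P0 := expR_gt0 (b * ln X); have Q0 := expR_gt0 (b * ln (1 - X)).
set P := expR (b * ln X) in P0 *; set Q := expR (b * ln (1 - X)) in Q0 *.
rewrite ler_pdivlMr; last by nra.
rewrite -[X in _ = X]ler_expR !expRD !expRln // -/P -/Q.
apply/idP/idP => H; nra.
Qed.

Lemma sign_F' (b X s t : R) : 0 < X < 1 -> 0 < s -> 0 < t ->
  (X `^ b * s / (X `^ b * s + (1 - X) `^ b * t) <= X) =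
  (ln (1 - X) + b * ln X + ln s <= ln X + b * ln (1 - X) + ln t).
Proof.
move=> /andP[X0 X1] s0 t0.
have X0' : 0 < 1 - X by lra.
rewrite !powRE //.
have P0 := expR_gt0 (b * ln X); have Q0 := expR_gt0 (b * ln (1 - X)).
set P := expR (b * ln X) in P0 *; set Q := expR (b * ln (1 - X)) in Q0 *.
rewrite ler_pdivrMr; last by nra.
rewrite -[X in _ = X]ler_expR !expRD !expRln // -/P -/Q.
apply/idP/idP => H; nra.
Qed.

Lemma psi_ell (c X : R) : 0 < c -> 0 < X < 1 ->
  psi (1 + c) (ell X) = ln (1 + c * X) - ln (1 + c - c * X).
Proof.
move=> c0 /andP[X0 X1].
rewrite /psi /ell expRD expRN !expRln; try lra.
have -> : 1 + (1 + c) * (X * (1 - X)^-1) = (1 + c * X) / (1 - X) by field; lra.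
have -> : 1 + c + (X * (1 - X)^-1) = (1 + c - c * X) / (1 - X) by field; lra.
rewrite !ln_div ?posrE; try nra.
Qed.


Lemma gfun_psi {b c xh : R} : 0 < b < 1 -> 0 < c -> 2^-1 < xh < 1 ->
  gfun xh b = c -> psi (1 + c) (ell xh) = (1 - b) * ell xh.
Proof.
move=> /andP[b0 b1] c0 /andP[x1 x2].
rewrite /gfun ifF; last by apply/negbTE; rewrite neq_lt x1 orbT.
have xp : 0 < xh by lra.
have xq : 0 < 1 - xh by lra.
rewrite !powRE //.
set A := expR ((1 - b) * ln xh); set B := expR ((1 - b) * ln (1 - xh)).
have [den0|den0] := eqVneq (xh * B - (1 - xh) * A) 0.
  by rewrite den0 invr0 mulr0 => c0'; rewrite c0' in c0; rewrite ltxx in c0.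
move=> H.
have H2 : A - B = c * (xh * B - (1 - xh) * A) by rewrite -H divfK.
have H3 : A * (1 + c - c * xh) = B * (1 + c * xh) by lra.
have H4 := congr1 (@ln R) H3.
rewrite !lnM ?posrE ?expR_gt0 // in H4; try nra.
rewrite /A /B !expRK in H4.
rewrite psi_ell; last by lra. 2: by [].
rewrite /ell; lra.
Qed.

Lemma below_sub {b c x1 xh : R} : 0 < b < 1 -> 0 < c -> 2^-1 < x1 -> x1 < xh -> xh < 1 ->
  psi (1 + c) (ell xh) = (1 - b) * ell xh -> (1 - b) * ell x1 < psi (1 + c) (ell x1).
Proof.
move=> /andP[b0 b1] c0 x10 x1h xh1 H.
have e1 : 0 < ell x1 by apply: ell_gt0; lra.
have e12 : ell x1 < ell xh by apply: ell_lt; lra.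
have m1 : 1 < 1 + c by lra.
have := psi_star m1 e1 e12; rewrite H => st.
have e2 : 0 < ell xh by lra.
nra.
Qed.

Definition sY (K D Y : R) := K * Y + D * (1 - Y).
Definition Fm (b K D X Y : R) :=
  X `^ b * sY K D Y / (X `^ b * sY K D Y + (1 - X) `^ b * (K + D - sY K D Y)).
Definition YL (phi K D X : R) := (phi * (K + D) * X + (1 - phi) * D) / (phi * K + (2 - phi) * D).

Lemma YL_fix {phi K D : R} (X : R) : 0 < phi < 1 -> 0 < D -> D < K ->
  YL phi K D X = phi * X + (1 - phi) * (sY K D (YL phi K D X) / (K + D)).
Proof.
move=> /andP[p0 p1] D0 DK; rewrite /YL /sY.
have h1 : 0 < phi * K + (2 - phi) * D by nra.
field; apply/andP; split; apply: lt0r_neq0; lra.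
Qed.

Lemma YL_psi {phi K D X : R} : 0 < phi < 1 -> 0 < D -> D < K -> 0 < X < 1 ->
  ln (sY K D (YL phi K D X)) - ln (K + D - sY K D (YL phi K D X)) =
  psi (1 + phi * (K / D - 1)) (ell X).
Proof.
move=> /andP[p0 p1] D0 DK /andP[X0 X1].
have c0 : 0 < phi * (K / D - 1).
  apply: mulr_gt0 => //; rewrite subr_gt0 ltr_pdivlMr // mul1r //.
rewrite psi_ell //; last by lra.
have h1 : 0 < phi * K + (2 - phi) * D by nra.
have -> : sY K D (YL phi K D X) = (D * (1 + phi * (K / D - 1) * X)) * (K + D) / (phi * K + (2 - phi) * D).
  by rewrite /sY /YL; field; apply/andP; split; apply: lt0r_neq0; lra.
have -> : K + D - (D * (1 + phi * (K / D - 1) * X)) * (K + D) / (phi * K + (2 - phi) * D)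
   = (D * (1 + phi * (K / D - 1) - phi * (K / D - 1) * X)) * (K + D) / (phi * K + (2 - phi) * D).
  by field; apply/andP; split; apply: lt0r_neq0; lra.
have q1 : 0 < 1 + phi * (K / D - 1) * X by nra.
have q2 : 0 < 1 + phi * (K / D - 1) - phi * (K / D - 1) * X by nra.
rewrite !ln_div ?posrE; try (apply: mulr_gt0; nra).
rewrite !lnM ?posrE //; try lra. all: try exact: h1; by apply: mulr_gt0.
Qed.

Lemma sY_pos {K D Y : R} : 0 < D -> D < K -> 0 <= Y <= 1 ->
  0 < sY K D Y /\ 0 < K + D - sY K D Y.
Proof. move=> D0 DK /andP[Y0 Y1]; rewrite /sY; split; nra. Qed.

Lemma YL_bounds {phi K D X : R} : 0 < phi < 1 -> 0 < D -> D < K -> 2^-1 < X < 1 ->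
  2^-1 < YL phi K D X < 1.
Proof.
move=> /andP[p0 p1] D0 DK /andP[X0 X1].
have h1 : 0 < phi * K + (2 - phi) * D by nra.
have k1 : 0 < phi * (K + D) by apply: mulr_gt0; lra.
have k2 : 0 < phi * (K + D) * (X - 2^-1) by apply: mulr_gt0; lra.
have k3 : 0 < phi * (K + D) * (1 - X) by apply: mulr_gt0; lra.
have k4 : 0 < (1 - phi) * D by apply: mulr_gt0; lra.
rewrite /YL; apply/andP; split.
  rewrite ltr_pdivlMr //; lra.
rewrite ltr_pdivrMr //; lra.
Qed.

Lemma Fm_sub {b phi K D X : R} : 0 < phi < 1 -> 0 < D -> D < K -> 2^-1 < X < 1 ->
  (1 - b) * ell X <= psi (1 + phi * (K / D - 1)) (ell X) ->
  X <= Fm b K D X (YL phi K D X).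
Proof.
move=> hp D0 DK hX H.
have /andP[Y0 Y1] := YL_bounds hp D0 DK hX.
have hX' : 0 < X < 1 by move: hX => /andP[? ?]; apply/andP; split; lra.
have hY : 0 <= YL phi K D X <= 1 by apply/andP; split; lra.
have [s0 t0] := sY_pos D0 DK hY.
have E := YL_psi hp D0 DK hX'.
rewrite /Fm sign_F //.
move: H E; rewrite /ell.
set u := ln (sY K D (YL phi K D X)); set v := ln (K + D - sY K D (YL phi K D X)).
set w := psi _ _.
lra.
Qed.
Lemma Fm_fix {b phi K D X : R} : 0 < phi < 1 -> 0 < D -> D < K -> 2^-1 < X < 1 ->
  Fm b K D X (YL phi K D X) = X ->
  psi (1 + phi * (K / D - 1)) (ell X) = (1 - b) * ell X.
Proof.
move=> hp D0 DK hX H.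
have /andP[Y0 Y1] := YL_bounds hp D0 DK hX.
have hX' : 0 < X < 1 by move: hX => /andP[? ?]; apply/andP; split; lra.
have hY : 0 <= YL phi K D X <= 1 by apply/andP; split; lra.
have [s0 t0] := sY_pos D0 DK hY.
have E := YL_psi hp D0 DK hX'.
have H1 : X <= Fm b K D X (YL phi K D X) by rewrite H.
have H2 : Fm b K D X (YL phi K D X) <= X by rewrite H.
rewrite /Fm sign_F // in H1; rewrite /Fm sign_F' // in H2.
move: H1 H2 E; rewrite /ell.
set u := ln (sY K D (YL phi K D X)); set v := ln (K + D - sY K D (YL phi K D X)).
set w := psi _ _.
lra.
Qed.

Lemma Fm_mono {b K D X1 X2 Y1 Y2 : R} : 0 <= b -> 0 < D -> D < K ->
  0 < X1 -> X1 <= X2 -> X2 < 1 -> 0 <= Y1 -> Y1 <= Y2 -> Y2 <= 1 ->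
  Fm b K D X1 Y1 <= Fm b K D X2 Y2.
Proof.
move=> b0 D0 DK X10 X12 X21 Y10 Y12 Y21.
have [s10 t10] := @sY_pos K D Y1 D0 DK ltac:(apply/andP; split; lra).
have [s20 t20] := @sY_pos K D Y2 D0 DK ltac:(apply/andP; split; lra).
have s12 : sY K D Y1 <= sY K D Y2.
  rewrite -subr_ge0; have -> : sY K D Y2 - sY K D Y1 = (K - D) * (Y2 - Y1) by rewrite /sY; ring.
  apply: mulr_ge0; lra.
have pX : X1 `^ b <= X2 `^ b by apply: ge0_ler_powR => //; rewrite nnegrE; lra.
have qX : (1 - X2) `^ b <= (1 - X1) `^ b by apply: ge0_ler_powR => //; rewrite ?nnegrE; lra.
have p1 : 0 < X1 `^ b by apply: powR_gt0; lra.
have q2 : 0 < (1 - X2) `^ b by apply: powR_gt0; lra.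
rewrite /Fm.
set s1 := sY K D Y1 in s10 t10 s12 *; set s2 := sY K D Y2 in s20 t20 s12 *.
set P1 := X1 `^ b in pX p1 *; set P2 := X2 `^ b in pX *.
set Q1 := (1 - X1) `^ b in qX *; set Q2 := (1 - X2) `^ b in qX q2 *.
have hA : P1 * s1 <= P2 * s2 by apply: ler_pM; lra.
have hB : Q2 * (K + D - s2) <= Q1 * (K + D - s1) by apply: ler_pM; lra.
have u1 : 0 < P1 * s1 by apply: mulr_gt0.
have u2 : 0 < Q2 * (K + D - s2) by apply: mulr_gt0.
set a1 := P1 * s1 in hA u1 *; set a2 := P2 * s2 in hA *.
set b1 := Q1 * (K + D - s1) in hB *; set b2 := Q2 * (K + D - s2) in hB u2 *.
have hC : a1 * b2 <= a2 * b1 by apply: ler_pM; lra.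
rewrite ler_pdivrMr; last by lra.
rewrite mulrAC ler_pdivlMr; last by lra.
rewrite -subr_ge0.
have -> : a2 * (a1 + b1) - a1 * (a2 + b2) = a2 * b1 - a1 * b2 by ring.
lra.
Qed.

Lemma Fm_range {b K D X Y : R} : 0 < b -> 0 < D -> D < K ->
  2^-1 < X < 1 -> 2^-1 <= Y <= 1 -> 2^-1 < Fm b K D X Y < 1.
Proof.
move=> b0 D0 DK /andP[X0 X1] /andP[Y0 Y1].
have [s0 t0] := @sY_pos K D Y D0 DK ltac:(apply/andP; split; lra).
have st : K + D - sY K D Y <= sY K D Y.
  rewrite -subr_ge0; have -> : sY K D Y - (K + D - sY K D Y) = (K - D) * (2 * Y - 1) by rewrite /sY; ring.
  apply: mulr_ge0; lra.
have pq : (1 - X) `^ b < X `^ b by apply: gt0_ltr_powR => //; rewrite ?nnegrE; lra.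
have q0 : 0 < (1 - X) `^ b by apply: powR_gt0; lra.
rewrite /Fm.
set s := sY K D Y in s0 t0 st *.
set P := X `^ b in pq *; set Q := (1 - X) `^ b in pq q0 *.
have u2 : 0 < Q * (K + D - s) by apply: mulr_gt0.
have u3 : Q * (K + D - s) < P * s.
  apply: (@le_lt_trans _ _ (Q * s)); first by apply: ler_pM; lra.
  by rewrite ltr_pM2r.
apply/andP; split.
  rewrite ltr_pdivlMr; last by lra.
  lra.
rewrite ltr_pdivrMr; last by lra.
lra.
Qed.

End A.

Section B.
Context {R : realType}.

Lemma mono_cvg {u : nat -> R} {N : nat} : monotone_from u N -> (forall t, 0 <= u t <= 1) ->
  exists l : R, u @ \oo --> l.
Proof.
move=> Hm Hb.
suff : cvgn (fun n => u (n + N)%N).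
  by case/cvg_ex => /= l; rewrite cvg_shiftn => ul; exists l.
case: Hm => Hm.
  apply: nondecreasing_is_cvgn.
    apply/nondecreasing_seqP => n; rewrite addSn; apply: Hm; exact: leq_addl.
  exists 1 => _ [n _ <-]; by case/andP: (Hb (n + N)%N).
apply: nonincreasing_is_cvgn.
  apply/nonincreasing_seqP => n; rewrite addSn; apply: Hm; exact: leq_addl.
exists 0 => _ [n _ <-]; by case/andP: (Hb (n + N)%N).
Qed.

Lemma cvg_ge {u : nat -> R} {l a : R} {N : nat} : u @ \oo --> l -> (forall t, (N <= t)%N -> a <= u t) -> a <= l.
Proof.
move=> ul H; apply: (cvgr_to_ge ul); exists N => // t /= Ht; exact: H.
Qed.

Lemma cvg_le {u : nat -> R} {l a : R} {N : nat} : u @ \oo --> l -> (forall t, (N <= t)%N -> u t <= a) -> l <= a.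
Proof.
move=> ul H; apply: (cvgr_to_le ul); exists N => // t /= Ht; exact: H.
Qed.

Lemma powR_cvg {u : nat -> R} {l : R} (b : R) : 0 < l -> u @ \oo --> l ->
  (fun t => u t `^ b) @ \oo --> l `^ b.
Proof.
move=> l0 ul.
have c : {for l, continuous ((@powR R) ^~ b)}.
  apply: differentiable_continuous; apply/derivable1_diffP.
  by apply: (@derivable_powR R 1 b l); rewrite in_itv /= andbT.
exact: (continuous_cvg _ c ul).
Qed.

Lemma Fm_cvg (b K D : R) (X Y : nat -> R) (x y : R) : 0 < D -> D < K ->
  0 < x < 1 -> 0 <= y <= 1 -> X @ \oo --> x -> Y @ \oo --> y ->
  (fun t => Fm b K D (X t) (Y t)) @ \oo --> Fm b K D x y.
Proof.
move=> D0 DK /andP[x0 x1] hy Xx Yy.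
have [s0 t0] := sY_pos D0 DK hy.
have p0 : 0 < x `^ b by apply: powR_gt0.
have q0 : 0 < (1 - x) `^ b by apply: powR_gt0; lra.
have cP := powR_cvg b x0 Xx.
have X1 : (fun t => 1 - X t) @ \oo --> 1 - x.
  by apply: cvgB; [exact: cvg_cst | exact: Xx].
have h1x : 0 < 1 - x by lra.
have cQ := powR_cvg b h1x X1.
have Y1 : (fun t => 1 - Y t) @ \oo --> 1 - y.
  by apply: cvgB; [exact: cvg_cst | exact: Yy].
have cS : (fun t => sY K D (Y t)) @ \oo --> sY K D y.
  rewrite /sY; apply: cvgD; apply: cvgM.
  - exact: cvg_cst.
  - exact: Yy.
  - exact: cvg_cst.
  - exact: Y1.
have cT : (fun t => K + D - sY K D (Y t)) @ \oo --> K + D - sY K D y.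
  by apply: cvgB; [exact: cvg_cst | exact: cS].
have nz : x `^ b * sY K D y + (1 - x) `^ b * (K + D - sY K D y) != 0.
  by apply: lt0r_neq0; apply: addr_gt0; apply: mulr_gt0.
have cPS : (fun t => X t `^ b * sY K D (Y t)) @ \oo --> x `^ b * sY K D y.
  by apply: cvgM; [exact: cP | exact: cS].
have cQT : (fun t => (1 - X t) `^ b * (K + D - sY K D (Y t))) @ \oo --> (1 - x) `^ b * (K + D - sY K D y).
  by apply: cvgM; [exact: cQ | exact: cT].
have cDen : (fun t => X t `^ b * sY K D (Y t) + (1 - X t) `^ b * (K + D - sY K D (Y t))) @ \oo
   --> x `^ b * sY K D y + (1 - x) `^ b * (K + D - sY K D y).
  by apply: cvgD; [exact: cPS | exact: cQT].
rewrite /Fm; apply: cvgM; first exact: cPS.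
by apply: cvgV; [exact: nz | exact: cDen].
Qed.

Lemma convex_le (phi lo u v : R) : 0 < phi < 1 -> lo <= u -> lo <= v -> lo <= phi * u + (1 - phi) * v.
Proof.
move=> /andP[p0 p1] hu hv.
have h1 : 0 <= phi * (u - lo) by apply: mulr_ge0; lra.
have h2 : 0 <= (1 - phi) * (v - lo) by apply: mulr_ge0; lra.
have -> : phi * u + (1 - phi) * v = lo + phi * (u - lo) + (1 - phi) * (v - lo) by ring.
lra.
Qed.

Lemma convex_lt (phi lo u v : R) : 0 < phi < 1 -> lo < u -> lo <= v -> lo < phi * u + (1 - phi) * v.
Proof.
move=> /andP[p0 p1] hu hv.
have h1 : 0 < phi * (u - lo) by apply: mulr_gt0; lra.
have h2 : 0 <= (1 - phi) * (v - lo) by apply: mulr_ge0; lra.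
have -> : phi * u + (1 - phi) * v = lo + phi * (u - lo) + (1 - phi) * (v - lo) by ring.
lra.
Qed.

Lemma convex_ge (phi hi u v : R) : 0 < phi < 1 -> u <= hi -> v <= hi -> phi * u + (1 - phi) * v <= hi.
Proof.
move=> /andP[p0 p1] hu hv.
have h1 : 0 <= phi * (hi - u) by apply: mulr_ge0; lra.
have h2 : 0 <= (1 - phi) * (hi - v) by apply: mulr_ge0; lra.
have -> : phi * u + (1 - phi) * v = hi - phi * (hi - u) - (1 - phi) * (hi - v) by ring.
lra.
Qed.

Lemma sd_bounds {K D Z : R} : 0 < D -> D < K -> 2^-1 <= Z <= 1 ->
  2^-1 <= sY K D Z / (K + D) <= 1.
Proof.
move=> D0 DK /andP[Z0 Z1].
have KD : 0 < K + D by lra.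
have h1 : 0 <= (K - D) * (2 * Z - 1) by apply: mulr_ge0; lra.
have h2 : 0 <= (K - D) * (1 - Z) by apply: mulr_ge0; lra.
apply/andP; split.
  rewrite ler_pdivlMr //; rewrite /sY.
  have -> : K * Z + D * (1 - Z) = (K + D) / 2 + (K - D) * (2 * Z - 1) / 2 by field.
  lra.
rewrite ler_pdivrMr // mul1r /sY.
have -> : K * Z + D * (1 - Z) = K + D - D * Z - K * (1 - Z) by ring.
have : 0 <= D * Z by apply: mulr_ge0; lra.
have : 0 <= K * (1 - Z) by apply: mulr_ge0; lra.
lra.
Qed.

Lemma sY_le {K D Z1 Z2 : R} : 0 < D -> D < K -> Z1 <= Z2 ->
  sY K D Z1 / (K + D) <= sY K D Z2 / (K + D).
Proof.
move=> D0 DK Z12.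
rewrite ler_pM2r; last by rewrite invr_gt0; lra.
rewrite -subr_ge0; have -> : sY K D Z2 - sY K D Z1 = (K - D) * (Z2 - Z1) by rewrite /sY; ring.
apply: mulr_ge0; lra.
Qed.

End B.

Section C.
Context {R : realType}.

Lemma lecmp (a c : R) : a <= c \/ c < a.
Proof. by case: (boolP (a <= c)) => h; [left | right; rewrite ltNge]. Qed.

Definition Aty (X Y : nat -> R) (t : nat) := X t <= X t.+1 /\ Y t <= Y t.+1.
Definition Bty (X Y : nat -> R) (t : nat) := X t.+1 <= X t /\ Y t.+1 <= Y t.

Definition sysX (b K D : R) (X Y : nat -> R) := forall t, X t.+1 = Fm b K D (X t) (Y t).
Definition sysY (phi K D : R) (X Y : nat -> R) :=
  forall t, Y t.+1 = phi * X t.+1 + (1 - phi) * (sY K D (Y t) / (K + D)).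

Lemma Fm_mono' {b K D X1 X2 Y1 Y2 : R} : 0 < b -> 0 < D -> D < K ->
  2^-1 < X1 < 1 -> 2^-1 < X2 < 1 -> 2^-1 <= Y1 <= 1 -> 2^-1 <= Y2 <= 1 ->
  X1 <= X2 -> Y1 <= Y2 -> Fm b K D X1 Y1 <= Fm b K D X2 Y2.
Proof.
move=> b0 D0 DK /andP[x1 x1'] /andP[x2 x2'] /andP[y1 y1'] /andP[y2 y2'] hx hy.
apply: Fm_mono; lra.
Qed.

Lemma rng_lem (b phi K D : R) (X Y : nat -> R) : 0 < b -> 0 < phi < 1 -> 0 < D -> D < K ->
  2^-1 < X 0%N < 1 -> 2^-1 <= Y 0%N <= 1 -> sysX b K D X Y -> sysY phi K D X Y ->
  forall t, (2^-1 < X t < 1 /\ 2^-1 <= Y t <= 1) /\ 2^-1 < Y t.+1.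
Proof.
move=> b0 hp D0 DK hX0 hY0 HX HY.
have rng : forall t, 2^-1 < X t < 1 /\ 2^-1 <= Y t <= 1.
  elim => [|t [IHx IHy]]; first by split.
  have hx' := Fm_range b0 D0 DK IHx IHy.
  rewrite -HX in hx'.
  split; first exact: hx'.
  have /andP[q1 q2] := sd_bounds D0 DK IHy.
  case/andP: hx' => x1 x2.
  rewrite HY; apply/andP; split.
    apply: convex_le; [exact: hp | lra | exact: q1].
  apply: convex_ge; [exact: hp | lra | exact: q2].
move=> t; split; first exact: rng.
have [IHx IHy] := rng t.
have hx' := Fm_range b0 D0 DK IHx IHy; rewrite -HX in hx'.
have /andP[q1 q2] := sd_bounds D0 DK IHy.
case/andP: hx' => x1 x2.
rewrite HY; apply: convex_lt; [exact: hp | exact: x1 | exact: q1].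
Qed.

Lemma sub_lem (b phi K D xh : R) (X Y : nat -> R) : 0 < b < 1 -> 0 < phi < 1 -> 0 < D -> D < K ->
  2^-1 < xh < 1 -> psi (1 + phi * (K / D - 1)) (ell xh) = (1 - b) * ell xh ->
  sysX b K D X Y -> sysY phi K D X Y ->
  (forall t, (2^-1 < X t < 1 /\ 2^-1 <= Y t <= 1) /\ 2^-1 < Y t.+1) ->
  exists xw, 2^-1 < xw < xh /\ forall n, xw <= X n.+1 /\ YL phi K D xw <= Y n.+1.
Proof.
move=> hb hp D0 DK /andP[xh1 xhu] Eh HX HY rng.
have b0 : 0 < b by case/andP: hb.
have p0 : 0 < phi by case/andP: hp.
have p1 : phi < 1 by case/andP: hp.
have c0 : 0 < phi * (K / D - 1).
  apply: mulr_gt0; first exact: p0.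
  by rewrite subr_gt0 ltr_pdivlMr // mul1r.
have N0 : 0 < phi * K + (2 - phi) * D by apply: addr_gt0; apply: mulr_gt0; lra.
have mu0 : 0 < phi * (K + D) / (phi * K + (2 - phi) * D).
  by apply: divr_gt0; [apply: mulr_gt0; lra | exact: N0].
have YLe : forall z, YL phi K D z = 2^-1 + (phi * (K + D) / (phi * K + (2 - phi) * D)) * (z - 2^-1).
  move=> z; rewrite /YL; field; exact: lt0r_neq0 N0.
move: (phi * (K + D) / (phi * K + (2 - phi) * D)) mu0 YLe => mu mu0 YLe.
have [[/andP[X1l X1u] _] Y1l] := rng 0%N.
have [[/andP[X1l' X1u'] /andP[_ Y1u]] _] := rng 1%N.
have [del [d0 [d1 [d2 d3]]]] : exists del, 0 < del /\ del <= X 1%N - 2^-1 /\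
    del <= (Y 1%N - 2^-1) / mu /\ del <= (xh - 2^-1) / 2.
  exists (Order.min (Order.min (X 1%N - 2^-1) ((Y 1%N - 2^-1) / mu)) ((xh - 2^-1) / 2)).
  split.
    rewrite !lt_min; apply/andP; split; first (apply/andP; split).
    - lra.
    - apply: divr_gt0; [lra | exact: mu0].
    - lra.
  split; first by rewrite !ge_min lexx.
  split; first by rewrite !ge_min lexx orbT.
  by rewrite ge_min lexx orbT.
exists (2^-1 + del).
have xw1 : 2^-1 < 2^-1 + del by lra.
have xwh : 2^-1 + del < xh by lra.
have xwr : 2^-1 < 2^-1 + del < 1 by apply/andP; split; lra.
split; first by apply/andP; split.
have xwsub : 2^-1 + del <= Fm b K D (2^-1 + del) (YL phi K D (2^-1 + del)).
  apply: (Fm_sub hp D0 DK xwr).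
  apply: ltW; exact: (below_sub hb c0 xw1 xwh xhu Eh).
have /andP[YLw1 YLw2] := YL_bounds hp D0 DK xwr.
have YLwr : 2^-1 <= YL phi K D (2^-1 + del) <= 1 by apply/andP; split; lra.
have bX : 2^-1 + del <= X 1%N by lra.
have bY : YL phi K D (2^-1 + del) <= Y 1%N.
  rewrite YLe.
  have h : mu * del <= mu * ((Y 1%N - 2^-1) / mu) by rewrite ler_pM2l.
  have e : mu * ((Y 1%N - 2^-1) / mu) = Y 1%N - 2^-1 by field; exact: lt0r_neq0.
  rewrite e in h.
  have -> : 2^-1 + del - 2^-1 = del by ring.
  lra.
move: (2^-1 + del) xw1 xwh xwr xwsub YLw1 YLw2 YLwr bX bY => xw xw1 xwh xwr xwsub YLw1 YLw2 YLwr bX bY.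
elim => [|n [IHx IHy]].
  split; [exact: bX | exact: bY].
have [[hXr hYr] _] := rng n.+1.
have HXn : xw <= X n.+2.
  rewrite HX; apply: le_trans xwsub _; exact: (Fm_mono' b0 D0 DK xwr hXr YLwr hYr IHx IHy).
split; first exact: HXn.
rewrite HY (YL_fix xw hp D0 DK).
apply: lerD; first by apply: ler_wpM2l; [lra | exact: HXn].
apply: ler_wpM2l; first lra.
exact: sY_le.
Qed.

Lemma mono_lem (b phi K D : R) (X Y : nat -> R) (T0 : nat) : 0 < b -> 0 < phi < 1 -> 0 < D -> D < K ->
  sysX b K D X Y -> sysY phi K D X Y ->
  (forall t, (2^-1 < X t < 1 /\ 2^-1 <= Y t <= 1) /\ 2^-1 < Y t.+1) ->
  exists Tt, (T0 < Tt)%N /\ monotone_from X Tt /\ monotone_from Y Tt.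
Proof.
move=> b0 hp D0 DK HX HY rng.
have p0 : 0 < phi by case/andP: hp.
have p1 : phi < 1 by case/andP: hp.
have kk : 0 <= (1 - phi) * ((K - D) / (K + D)).
  apply: mulr_ge0; first lra.
  apply: divr_ge0; lra.
have key : forall t, Y t.+2 - Y t.+1 =
    phi * (X t.+2 - X t.+1) + (1 - phi) * ((K - D) / (K + D)) * (Y t.+1 - Y t).
  move=> t; rewrite [Y t.+2]HY [Y t.+1]HY /sY; field; apply: lt0r_neq0; lra.
move: ((1 - phi) * ((K - D) / (K + D))) kk key => k kk key.
have FmX : forall t, X t <= X t.+1 -> Y t <= Y t.+1 -> X t.+1 <= X t.+2.
  move=> t h1 h2.
  have [[hx hy] _] := rng t.
  have [[hx' hy'] _] := rng t.+1.
  have h3 := Fm_mono' b0 D0 DK hx hx' hy hy' h1 h2.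
  by rewrite -HX -HX in h3.
have FmX' : forall t, X t.+1 <= X t -> Y t.+1 <= Y t -> X t.+2 <= X t.+1.
  move=> t h1 h2.
  have [[hx hy] _] := rng t.
  have [[hx' hy'] _] := rng t.+1.
  have h3 := Fm_mono' b0 D0 DK hx' hx hy' hy h1 h2.
  by rewrite -HX -HX in h3.
have Yup : forall t, X t.+1 <= X t.+2 -> Y t <= Y t.+1 -> Y t.+1 <= Y t.+2.
  move=> t h1 h2; suff : 0 <= Y t.+2 - Y t.+1 by lra.
  rewrite key; apply: addr_ge0.
    apply: mulr_ge0; lra.
  apply: mulr_ge0; [exact: kk | lra].
have Ydn : forall t, X t.+2 <= X t.+1 -> Y t.+1 <= Y t -> Y t.+2 <= Y t.+1.
  move=> t h1 h2; suff : Y t.+2 - Y t.+1 <= 0 by lra.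
  rewrite key.
  have q1 : phi * (X t.+2 - X t.+1) <= 0 by apply: mulr_ge0_le0; lra.
  have q2 : k * (Y t.+1 - Y t) <= 0 by apply: mulr_ge0_le0; [exact: kk | lra].
  lra.
clear key kk.
have Astep : forall t, Aty X Y t -> Aty X Y t.+1.
  move=> t [h1 h2]; have h3 := FmX t h1 h2; split; [exact: h3 | exact: Yup t h3 h2].
have Bstep : forall t, Bty X Y t -> Bty X Y t.+1.
  move=> t [h1 h2]; have h3 := FmX' t h1 h2; split; [exact: h3 | exact: Ydn t h3 h2].
have Cstep : forall t, X t <= X t.+1 -> Y t.+1 <= Y t ->
    Aty X Y t.+1 \/ Bty X Y t.+1 \/ (X t.+1 <= X t.+2 /\ Y t.+2 <= Y t.+1).
  move=> t h1 h2.
  have [h3|h3] := lecmp (X t.+1) (X t.+2).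
    have [h4|h4] := lecmp (Y t.+1) (Y t.+2).
      left; split; [exact: h3 | exact: h4].
    right; right; split; [exact: h3 | exact: ltW h4].
  right; left; split; first exact: ltW h3.
  exact: Ydn t (ltW h3) h2.
have Dstep : forall t, X t.+1 <= X t -> Y t <= Y t.+1 ->
    Aty X Y t.+1 \/ Bty X Y t.+1 \/ (X t.+2 <= X t.+1 /\ Y t.+1 <= Y t.+2).
  move=> t h1 h2.
  have [h3|h3] := lecmp (X t.+1) (X t.+2).
    left; split; [exact: h3 | exact: Yup t h3 h2].
  have [h4|h4] := lecmp (Y t.+1) (Y t.+2).
    right; right; split; [exact: ltW h3 | exact: h4].
  right; left; split; [exact: ltW h3 | exact: ltW h4].
clear FmX FmX' Yup Ydn.
have [[t0 [Ht0 HAB]]|Hno] := pselect (exists t0, (T0 < t0)%N /\ (Aty X Y t0 \/ Bty X Y t0)).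
  exists t0; split; first exact: Ht0.
  case: HAB => HA.
    have Aall : forall n, Aty X Y (t0 + n)%N.
      elim => [|n IH]; first by rewrite addn0.
      rewrite addnS; exact: Astep.
    split; left => t Ht; have := Aall (t - t0)%N; rewrite subnKC; (try exact: Ht); case; move=> a b'; assumption.
  have Ball : forall n, Bty X Y (t0 + n)%N.
    elim => [|n IH]; first by rewrite addn0.
    rewrite addnS; exact: Bstep.
  split; right => t Ht; have := Ball (t - t0)%N; rewrite subnKC; (try exact: Ht); case; move=> a b'; assumption.
have nA : forall t, (T0 < t)%N -> ~ Aty X Y t.
  move=> t Ht HA; apply: Hno; exists t; split; [exact: Ht | left; exact: HA].
have nB : forall t, (T0 < t)%N -> ~ Bty X Y t.
  move=> t Ht HB; apply: Hno; exists t; split; [exact: Ht | right; exact: HB].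
have lt1 : forall n, (T0 < (T0.+1 + n).+1)%N.
  move=> n; rewrite ltnS; exact: leq_trans (leqnSn _) (leq_addr _ _).
exists T0.+1; split; first exact: ltnSn.
have [h1|h1] := lecmp (X T0.+1) (X T0.+2); have [h2|h2] := lecmp (Y T0.+1) (Y T0.+2).
- exfalso; apply: (nA T0.+1 (ltnSn _)); split; [exact: h1 | exact: h2].
- have Call : forall n, X (T0.+1 + n)%N <= X (T0.+1 + n)%N.+1 /\ Y (T0.+1 + n)%N.+1 <= Y (T0.+1 + n)%N.
    elim => [|n [IH1 IH2]]; first by rewrite addn0; split; [exact: h1 | exact: ltW h2].
    rewrite addnS.
    case: (Cstep _ IH1 IH2) => [HA|[HB|HC]].
    + exfalso; exact: (nA _ (lt1 n) HA).
    + exfalso; exact: (nB _ (lt1 n) HB).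
    + exact: HC.
  split; [left|right] => t Ht; have := Call (t - T0.+1)%N; rewrite subnKC; (try exact: Ht); case; move=> a b'; assumption.
- have Dall : forall n, X (T0.+1 + n)%N.+1 <= X (T0.+1 + n)%N /\ Y (T0.+1 + n)%N <= Y (T0.+1 + n)%N.+1.
    elim => [|n [IH1 IH2]]; first by rewrite addn0; split; [exact: ltW h1 | exact: h2].
    rewrite addnS.
    case: (Dstep _ IH1 IH2) => [HA|[HB|HC]].
    + exfalso; exact: (nA _ (lt1 n) HA).
    + exfalso; exact: (nB _ (lt1 n) HB).
    + exact: HC.
  split; [right|left] => t Ht; have := Dall (t - T0.+1)%N; rewrite subnKC; (try exact: Ht); case; move=> a b'; assumption.
- exfalso; apply: (nB T0.+1 (ltnSn _)); split; [exact: ltW h1 | exact: ltW h2].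
Qed.

Lemma reduced (b phi K D xh : R) (T0 : nat) (X Y : nat -> R) :
  0 < b < 1 -> 0 < phi < 1 -> 0 < D -> D < K ->
  gfun xh b = phi * (K / D - 1) -> 2^-1 <= xh < 1 ->
  2^-1 < X 0%N < 1 -> 2^-1 <= Y 0%N <= 1 ->
  sysX b K D X Y -> sysY phi K D X Y ->
  (forall t, (T0 <= t)%N -> X t < xh) ->
  exists Tt : nat, (T0 < Tt)%N /\ monotone_from X Tt /\ monotone_from Y Tt /\
    X @ \oo --> xh /\ Y @ \oo --> YL phi K D xh.
Proof.
move=> hb hp D0 DK Hg /andP[xhl xhu] hX0 hY0 HX HY Hbel.
have b0 : 0 < b by case/andP: hb.
have p0 : 0 < phi by case/andP: hp.
have p1 : phi < 1 by case/andP: hp.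
have rng := rng_lem _ _ _ _ _ _ b0 hp D0 DK hX0 hY0 HX HY.
have xh1 : 2^-1 < xh.
  have [[/andP[a _] _] _] := rng T0; have := Hbel T0 (leqnn _); lra.
have c0 : 0 < phi * (K / D - 1).
  apply: mulr_gt0; first exact: p0.
  by rewrite subr_gt0 ltr_pdivlMr // mul1r.
have xhr : 2^-1 < xh < 1 by apply/andP; split.
have Eh := gfun_psi hb c0 xhr Hg.
have [xw [/andP[xw1 xwh] inv]] := sub_lem _ _ _ _ _ _ _ hb hp D0 DK xhr Eh HX HY rng.
have [Tt [HTt [MX MY]]] := mono_lem _ _ _ _ _ _ T0 b0 hp D0 DK HX HY rng.
have bX : forall t, 0 <= X t <= 1.
  by move=> t; have [[/andP[? ?] _] _] := rng t; apply/andP; split; lra.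
have bY : forall t, 0 <= Y t <= 1.
  by move=> t; have [[_ /andP[? ?]] _] := rng t; apply/andP; split; lra.
have [xs Xxs] := mono_cvg MX bX.
have [ys Yys] := mono_cvg MY bY.
have xs_le : xs <= xh by apply: (cvg_le (N:=T0) Xxs) => t Ht; apply: ltW; exact: Hbel.
have xs_ge : xw <= xs.
  apply: (cvg_ge (N:=1%N) Xxs) => t Ht; have [h _] := inv t.-1; by rewrite prednK in h.
have ys_ge : YL phi K D xw <= ys.
  apply: (cvg_ge (N:=1%N) Yys) => t Ht; have [_ h] := inv t.-1; by rewrite prednK in h.
have ys_le : ys <= 1 by apply: (cvg_le (N:=0%N) Yys) => t _; case/andP: (bY t).
have /andP[YLw1 _] := YL_bounds hp D0 DK (ltac:(apply/andP; split; lra) : 2^-1 < xw < 1).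
have KD : 0 < K + D by lra.
have L1 : (fun t => Y t.+1) @ \oo --> ys by rewrite (cvg_shiftS Y).
have L3 : (fun t => X t.+1) @ \oo --> xs by rewrite (cvg_shiftS X).
have cS : (fun t => sY K D (Y t)) @ \oo --> sY K D ys.
  rewrite /sY; apply: cvgD; apply: cvgM.
  - exact: cvg_cst.
  - exact: Yys.
  - exact: cvg_cst.
  - apply: cvgB; [exact: cvg_cst | exact: Yys].
have L2 : (fun t => Y t.+1) @ \oo --> phi * xs + (1 - phi) * (sY K D ys / (K + D)).
  have -> : (fun t => Y t.+1) = (fun t => phi * X t.+1 + (1 - phi) * (sY K D (Y t) / (K + D))).
    by apply/funext => t; rewrite HY.
  apply: cvgD; apply: cvgM.
  - exact: cvg_cst.
  - exact: L3.
  - exact: cvg_cst.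
  - apply: cvgM; [exact: cS | exact: cvg_cst].
have ey : ys = phi * xs + (1 - phi) * (sY K D ys / (K + D)).
  have e1 : limn (fun t => Y t.+1) = ys by apply: (cvg_lim (@Rhausdorff R)); exact: L1.
  have e2 : limn (fun t => Y t.+1) = phi * xs + (1 - phi) * (sY K D ys / (K + D)).
    by apply: (cvg_lim (@Rhausdorff R)); exact: L2.
  by rewrite -e2 e1.
have N0 : 0 < phi * K + (2 - phi) * D by apply: addr_gt0; apply: mulr_gt0; lra.
have eyL : ys = YL phi K D xs.
  have e2 : ys * (K + D) = phi * xs * (K + D) + (1 - phi) * sY K D ys.
    by rewrite {1}ey; field; apply: lt0r_neq0.
  have e3 : ys * (phi * K + (2 - phi) * D) = phi * (K + D) * xs + (1 - phi) * D.
    apply/eqP; rewrite -subr_eq0.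
    have -> : ys * (phi * K + (2 - phi) * D) - (phi * (K + D) * xs + (1 - phi) * D)
      = ys * (K + D) - (phi * xs * (K + D) + (1 - phi) * sY K D ys) by rewrite /sY; ring.
    by rewrite e2 subrr.
  rewrite /YL -e3; field; exact: lt0r_neq0.
have xsr : 2^-1 < xs < 1 by apply/andP; split; lra.
have L4 : (fun t => X t.+1) @ \oo --> Fm b K D xs ys.
  have -> : (fun t => X t.+1) = (fun t => Fm b K D (X t) (Y t)) by apply/funext => t; rewrite HX.
  apply: Fm_cvg => //.
  - apply/andP; split; lra.
  - apply/andP; split; lra.
have ex : Fm b K D xs ys = xs.
  have e1 : limn (fun t => X t.+1) = xs by apply: (cvg_lim (@Rhausdorff R)); exact: L3.
  have e2 : limn (fun t => X t.+1) = Fm b K D xs ys by apply: (cvg_lim (@Rhausdorff R)); exact: L4.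
  by rewrite -e2 e1.
rewrite eyL in ex.
have fx := Fm_fix hp D0 DK xsr ex.
have xs_eq : xs = xh.
  apply/eqP; rewrite eq_le xs_le /=; rewrite leNgt; apply/negP => lt.
  have := below_sub hb c0 (ltac:(lra) : 2^-1 < xs) lt xhu Eh.
  by rewrite fx ltxx.
exists Tt; split; first exact: HTt.
split; first exact: MX.
split; first exact: MY.
split; first by rewrite -xs_eq.
by rewrite -xs_eq -eyL.
Qed.

End C.

Section D.
Context {R : realType} {T : finType}.

Lemma ssum_split (e : rel T) (V1 : {set T}) (f : T -> R) j :
  ssum e f j = \sum_(k in [set k in V1 | e j k]) f k + \sum_(k in [set k in ~: V1 | e j k]) f k.
Proof.
rewrite /ssum (bigID (fun k => k \in V1)) /=; congr (_ + _); apply: eq_bigl => k; rewrite !inE andbC //.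
Qed.

Lemma sum_const_on (S : {set T}) (f : T -> R) (c : R) :
  (forall k, k \in S -> f k = c) -> \sum_(k in S) f k = #|S|%:R * c.
Proof.
move=> H; rewrite (eq_bigr (fun _ => c)); last exact: H.
by rewrite sumr_const mulr_natl.
Qed.

Lemma deg_split (e : rel T) (V1 : {set T}) j :
  deg e R j = #|[set k in V1 | e j k]|%:R + #|[set k in ~: V1 | e j k]|%:R.
Proof.
rewrite /deg -natrD; congr (_%:R); rewrite -(cardsID V1 [set k | e j k]).
have e1 : [set k in V1 | e j k] = [set k | e j k] :&: V1 by apply/setP => k; rewrite !inE andbC.
have e2 : [set k in ~: V1 | e j k] = [set k | e j k] :\: V1 by apply/setP => k; rewrite !inE andbC.
by rewrite e1 e2.
Qed.


Lemma Fm_compl (b K D X Y : R) : 0 < D -> D < K -> 0 < X < 1 -> 0 <= Y <= 1 ->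
  (1 - X) `^ b * sY K D (1 - Y) /
    ((1 - X) `^ b * sY K D (1 - Y) + (1 - (1 - X)) `^ b * (K + D - sY K D (1 - Y)))
  = 1 - Fm b K D X Y.
Proof.
move=> D0 DK /andP[x0 x1] hy.
have [s0 t0] := sY_pos D0 DK hy.
have -> : 1 - (1 - X) = X by ring.
have -> : sY K D (1 - Y) = K + D - sY K D Y by rewrite /sY; ring.
have -> : K + D - (K + D - sY K D Y) = sY K D Y by ring.
rewrite /Fm.
have p0 : 0 < X `^ b * sY K D Y by apply: mulr_gt0; [apply: powR_gt0 | exact: s0].
have q0 : 0 < (1 - X) `^ b * (K + D - sY K D Y).
  by apply: mulr_gt0; [apply: powR_gt0; lra | exact: t0].
move: (X `^ b * sY K D Y) ((1 - X) `^ b * (K + D - sY K D Y)) p0 q0 => p q p0 q0.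
field; apply: lt0r_neq0; lra.
Qed.

End D.

Theorem lemmaB6 (R : realType) (T : finType) (e : rel T) (V1 : {set T})
  (n ks kd : nat) (ps pd : R)
  (Hn : (0 < n)%N) (Hks : (0 < ks)%N) (Hkd : (0 < kd)%N)
  (Hps : 0 < ps < 1) (Hpd : 0 < pd < 1) (Hpspd : pd < ps)
  (Hks_def : n%:R * ps = ks%:R) (Hkd_def : n%:R * pd = kd%:R)
  (HG : two_island e V1 n ks kd)
  (phi b x0 y0 : R) (x y : nat -> T -> R)
  (Hphi : 0 < phi < 1)
  (Hb : 2 / (phi * (ps / pd - 1) + 2) <= b < 1)
  (Hx0 : 2^-1 < x0 < 1) (Hy0 : 2^-1 <= y0 <= x0)
  (Hinit1 : forall j, j \in V1 -> x 0%N j = x0 /\ y 0%N j = y0)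
  (Hinit2 : forall j, j \in ~: V1 -> x 0%N j = 1 - x0 /\ y 0%N j = 1 - y0)
  (Hdyn : dual_dynamics e phi b x y)
  (xh : R) (Hxh : 2^-1 <= xh < 1) (Hxh_sol : gfun xh b = phi * (ps / pd - 1))
  (i : T) (Hi : i \in V1) (T0 : nat) (HT0 : (0 < T0)%N)
  (Hbelow : forall t, (T0 <= t)%N -> x t i < xh) :
  exists Tt : nat, (T0 < Tt)%N /\
    monotone_from (fun t => x t i) Tt /\ monotone_from (fun t => y t i) Tt /\
    (fun t => x t i) @ \oo --> xh /\
    (fun t => y t i) @ \oo -->
      (phi * (ps / pd + 1) * xh + 1 - phi) / (phi * (ps / pd) + 2 - phi).
Proof.
case: HG => esym eirr [cV1 cV2] HV1 HV2.
have n0 : 0 < n%:R :> R by rewrite ltr0n.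
case/andP: Hps => ps0 ps1; case/andP: Hpd => pd0 pd1.
case/andP: Hphi => p0 p1.
have hp : 0 < phi < 1 by apply/andP; split.
set K : R := ks%:R.
set D : R := kd%:R.
have D0 : 0 < D by rewrite /D ltr0n.
have DK : D < K by rewrite /K /D -Hks_def -Hkd_def ltr_pM2l.
have hK : ps / pd = K / D.
  rewrite /K /D -Hks_def -Hkd_def; field; apply/andP; split; apply: lt0r_neq0; lra.
have KD : 0 < K + D by lra.
have b0 : 0 < b.
  case/andP: Hb => hb1 hb2.
  have hq : 0 < ps / pd - 1 by rewrite subr_gt0 ltr_pdivlMr // mul1r.
  have : 0 < 2 / (phi * (ps / pd - 1) + 2).
    apply: divr_gt0; first lra.
    have : 0 < phi * (ps / pd - 1) by apply: mulr_gt0.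
    lra.
  lra.
have hb : 0 < b < 1 by case/andP: Hb => _ hb2; apply/andP; split.
have Hg : gfun xh b = phi * (K / D - 1) by rewrite -hK.
pose X := fun t => x t i.
pose Y := fun t => y t i.
have degs : forall j, deg e R j = K + D.
  move=> j; rewrite (deg_split e V1 j).
  have [hj|hj] := boolP (j \in V1).
    by have [-> ->] := HV1 j hj.
  have hj' : j \in ~: V1 by rewrite finset.in_setC.
  by have [-> ->] := HV2 j hj'; rewrite addrC.
have sums : forall t, (forall j, j \in V1 -> y t j = Y t) -> (forall j, j \in ~: V1 -> y t j = 1 - Y t) ->
   (forall j, j \in V1 -> ssum e (y t) j = sY K D (Y t)) /\
   (forall j, j \in ~: V1 -> ssum e (y t) j = sY K D (1 - Y t)).
  move=> t H1 H2; split => j hj; rewrite (ssum_split e V1).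
    rewrite (sum_const_on _ _ (Y t)); last by move=> k; rewrite inE => /andP[hk _]; exact: H1.
    rewrite (sum_const_on _ _ (1 - Y t)); last by move=> k; rewrite inE => /andP[hk _]; exact: H2.
    by have [-> ->] := HV1 j hj; rewrite /sY.
  rewrite (sum_const_on _ _ (Y t)); last by move=> k; rewrite inE => /andP[hk _]; exact: H1.
  rewrite (sum_const_on _ _ (1 - Y t)); last by move=> k; rewrite inE => /andP[hk _]; exact: H2.
  have [-> ->] := HV2 j hj; rewrite /sY /K /D; ring.
have inv : forall t, ((forall j, j \in V1 -> x t j = X t /\ y t j = Y t) /\
                     (forall j, j \in ~: V1 -> x t j = 1 - X t /\ y t j = 1 - Y t)) /\
                     (2^-1 < X t < 1 /\ 2^-1 <= Y t <= 1).
  elim => [|t [[S1 S2] [rX rY]]].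
    have [ex ey] := Hinit1 i Hi.
    split.
      split => j hj; rewrite /X /Y ex ey; [exact: Hinit1 | exact: Hinit2].
    rewrite /X /Y ex ey; split; first exact: Hx0.
    case/andP: Hy0 => ? ?; case/andP: Hx0 => ? ?; apply/andP; split; lra.
  have [s1 s2] := sums t (fun j hj => (S1 j hj).2) (fun j hj => (S2 j hj).2).
  have HXt : X t.+1 = Fm b K D (X t) (Y t).
    have := Hdyn t i; rewrite /= => -[Hx _].
    by rewrite (s1 i Hi) (degs i) in Hx; rewrite /X Hx.
  have HYt : Y t.+1 = phi * X t.+1 + (1 - phi) * (sY K D (Y t) / (K + D)).
    have := Hdyn t i; rewrite /= => -[_ Hy].
    by rewrite (s1 i Hi) (degs i) in Hy; rewrite /Y Hy.
  have rX' := Fm_range b0 D0 DK rX rY; rewrite -HXt in rX'.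
  have rY' : 2^-1 <= Y t.+1 <= 1.
    have /andP[q1 q2] := sd_bounds D0 DK rY.
    case/andP: rX' => x1 x2.
    rewrite HYt; apply/andP; split.
      apply: convex_le; [exact: hp | lra | exact: q1].
    apply: convex_ge; [exact: hp | lra | exact: q2].
  split; last by split.
  split => j hj.
    have := Hdyn t j; rewrite /= => -[Hx Hy].
    rewrite (s1 j hj) (degs j) (S1 j hj).1 in Hx.
    rewrite (s1 j hj) (degs j) in Hy.
    have ex : x t.+1 j = X t.+1 by rewrite Hx HXt.
    split; first exact: ex.
    by rewrite Hy ex HYt.
  have := Hdyn t j; rewrite /= => -[Hx Hy].
  rewrite (s2 j hj) (degs j) (S2 j hj).1 in Hx.
  rewrite (s2 j hj) (degs j) in Hy.
  have hXr : 0 < X t < 1 by case/andP: rX => ? ?; apply/andP; split; lra.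
  have hYr : 0 <= Y t <= 1 by case/andP: rY => ? ?; apply/andP; split; lra.
  have ex : x t.+1 j = 1 - X t.+1 by rewrite Hx HXt (Fm_compl b K D (X t) (Y t) D0 DK hXr hYr).
  split; first exact: ex.
  rewrite Hy ex HYt.
  have -> : sY K D (1 - Y t) = K + D - sY K D (Y t) by rewrite /sY; ring.
  field; apply: lt0r_neq0; exact: KD.
have HsX : sysX b K D X Y.
  move=> t; have [[S1 S2] _] := inv t.
  have [s1 _] := sums t (fun j hj => (S1 j hj).2) (fun j hj => (S2 j hj).2).
  have := Hdyn t i; rewrite /= => -[Hx _].
  by rewrite (s1 i Hi) (degs i) in Hx; rewrite /X Hx.
have HsY : sysY phi K D X Y.
  move=> t; have [[S1 S2] _] := inv t.
  have [s1 _] := sums t (fun j hj => (S1 j hj).2) (fun j hj => (S2 j hj).2).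
  have := Hdyn t i; rewrite /= => -[_ Hy].
  by rewrite (s1 i Hi) (degs i) in Hy; rewrite /Y Hy.
have hX0 : 2^-1 < X 0%N < 1 by rewrite /X (Hinit1 i Hi).1.
have hY0 : 2^-1 <= Y 0%N <= 1 := (inv 0%N).2.2.
have [Tt [HT [MX [MY [LX LY]]]]] := reduced _ _ _ _ _ T0 X Y hb hp D0 DK Hg Hxh hX0 hY0 HsX HsY Hbelow.
exists Tt.
split; first exact: HT.
split; first exact: MX.
split; first exact: MY.
split; first exact: LX.
have -> : (phi * (ps / pd + 1) * xh + 1 - phi) / (phi * (ps / pd) + 2 - phi) = YL phi K D xh.
  rewrite hK /YL.
  have N0 : 0 < phi * K + (2 - phi) * D by apply: addr_gt0; apply: mulr_gt0; lra.
  have h2 : 0 < phi * (K / D) + 2 - phi.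
    have : 0 < phi * (K / D) by apply: mulr_gt0 => //; apply: divr_gt0; lra.
    lra.
  field; apply/andP; split; apply: lt0r_neq0; [exact: N0 | exact: D0].
exact: LY.
Qed.
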